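(* Let $d\ge 2$ and let $C,C_1,C_2,\ldots$ be $d$-dimensional copulas. If $C_n \xrightarrow{\text{wcc}} C$, then for every $J\subseteq\{1,\dots,d-1\}$ with $1\le |J|\le d-1$ we have $(C_n)_{J\cup\{d\}} \xrightarrow{\text{wcc}} C_{J\cup\{d\}}$.
   Context: $\mathbb{I}=[0,1]$, $\lambda$ denotes Lebesgue measure. For a $k$-dimensional copula $A$ ($k\ge 2$), its Markov kernel $K_A:\mathbb{I}\times\mathcal{B}(\mathbb{I}^{k-1})\to\mathbb{I}$ is (a version of) the regular conditional distribution of $(U_1,\dots,U_{k-1})$ given $U_k=v$, where $(U_1,\dots,U_k)\sim A$; equivalently $A(\mathbf{u},v)=\int_{[0,v]}K_A(t,[\mathbf{0},\mathbf{u}])\,d\lambda(t)$. A sequence of $k$-dimensional copulas $(A_n)$ converges weakly conditional to $A$, written $A_n\xrightarrow{\text{wcc}}A$, if for $\lambda$-almost every $v\in\mathbb{I}$ the probability measures $K_{A_n}(v,\cdot)$ converge weakly to $K_A(v,\cdot)$ on $\mathcal{B}(\mathbb{I}^{k-1})$. For $J'=\{j_1<\dots<j_m\}\subseteq\{1,\dots,d\}$ with $m\ge2$, $C_{J'}$ denotes the marginal copula of $C$ in the coordinates $j_1,\dots,j_m$ (in this order), so that in $C_{J\cup\{d\}}$ the last coordinate is coordinate $d$ of $C$. *)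

(* Defs.v *)
From HB Require Import structures.
From mathcomp Require Import all_boot all_order all_algebra.
From mathcomp Require Import all_classical all_reals all_analysis.

Unset Strict Implicit.
Unset Printing Implicit Defensive.

Import Order.TTheory GRing.Theory Num.Theory.
Import numFieldNormedType.Exports.
Local Open Scope classical_set_scope.
Local Open Scope ring_scope.

Section copulas.
Variable R : realType.

Definition unit_cube (k : nat) : set (k.-tuple R) :=
  [set x | forall i : 'I_k, 0 <= tnth x i <= 1].

(** A k-dimensional copula, given as a function on R^k of which only the
    values on I^k matter: grounded, uniform margins, k-increasing. *)
Definition copula {k : nat} (A : k.-tuple R -> R) : Prop :=
  [/\
      (forall u, u \in unit_cube k ->
         (exists i : 'I_k, tnth u i = 0) -> A u = 0),
      (forall u (i : 'I_k), u \in unit_cube k ->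
         (forall j : 'I_k, j != i -> tnth u j = 1) -> A u = tnth u i) &
      (* k-increasing: every A-volume of a box in I^k is nonnegative *)
      (forall a b, a \in unit_cube k -> b \in unit_cube k ->
         (forall i : 'I_k, tnth a i <= tnth b i) ->
         0 <= \sum_(S : {set 'I_k})
                 (-1) ^+ #|S| *
                 A [tuple (if i \in S then tnth a i else tnth b i) | i < k])].

Definition lower_box {m : nat} (u : m.-tuple R) : set (m.-tuple R) :=
  [set x | forall i : 'I_m, 0 <= tnth x i <= tnth u i].

(** K is (a version of) the Markov kernel of the (m+1)-dimensional copula A:
    a probability kernel from I to I^m (we take it on R -> R^m and require it
    to be concentrated on I^m for every v in I) with
    A(u,v) = \int_[0,v] K(t,[0,u]) d lambda(t). *)
Definition markov_kernel_of {m : nat} (A : m.+1.-tuple R -> R)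
    (K : R.-pker R ~> m.-tuple R) : Prop :=
  (forall v : R, 0 <= v <= 1 -> K v (~` unit_cube m) = 0%E) /\
  (forall (u : m.-tuple R) (v : R), u \in unit_cube m -> 0 <= v <= 1 ->
     (A [tuple of rcons u v])%:E =
     (\int[lebesgue_measure]_(t in `[0%R, v]) K t (lower_box u))%E).

(** continuous real functions on I^m (I^m with the product topology,
    i.e. the one given by the max-distance) *)
Definition cont_on_cube {m : nat} (f : m.-tuple R -> R) : Prop :=
  forall x, x \in unit_cube m -> forall e : R, 0 < e ->
  exists2 delta : R, 0 < delta &
    forall y, y \in unit_cube m ->
      (forall i : 'I_m, `|tnth x i - tnth y i| < delta) ->
      `|f x - f y| < e.

Definition weak_conv {m : nat} (mu_ : nat -> set (m.-tuple R) -> \bar R)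
    (mu : set (m.-tuple R) -> \bar R) : Prop :=
  forall f : m.-tuple R -> R, cont_on_cube f ->
    (fun n => \int[mu_ n]_(x in unit_cube m) (f x)%:E)%E @ \oo -->
    (\int[mu]_(x in unit_cube m) (f x)%:E)%E.

Definition wcc {m : nat} (A_ : nat -> m.+1.-tuple R -> R)
    (A : m.+1.-tuple R -> R) : Prop :=
  exists (K_ : nat -> R.-pker R ~> m.-tuple R) (K : R.-pker R ~> m.-tuple R),
  [/\ forall n, markov_kernel_of (A_ n) (K_ n),
      markov_kernel_of A K &
      {ae lebesgue_measure, forall v : R, 0 <= v <= 1 ->
         weak_conv (fun n => K_ n v) (K v)}].

(** For C a d-dimensional copula (d = n.+1, coordinates 0..n) and
    J a subset of {0,..,n-1}, the marginal copula C_{J u {n}} in the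
    coordinates of J (in increasing order) followed by coordinate n:
    the w-th argument position of an element j of J is its rank in enum J,
    the last argument (position #|J|) is coordinate n, all other coordinates
    are set to 1. *)
Definition marginal {n : nat} (C : n.+1.-tuple R -> R) (J : {set 'I_n.+1})
    : #|J|.+1.-tuple R -> R :=
  fun w => C [tuple (if i \in J then nth 1 w (index i (enum J))
                     else if i == ord_max then nth 1 w #|J| else 1) | i < n.+1].

End copulas.
Arguments unit_cube {R} k.
Arguments copula {R k} A.
Arguments lower_box {R m} u.
Arguments markov_kernel_of {R m} A K.
Arguments cont_on_cube {R m} f.
Arguments weak_conv {R m} mu_ mu.
Arguments wcc {R m} A_ A.
Arguments marginal {R n} C J.

(* Main.v *)
Require Import Defs.
From HB Require Import structures.
From mathcomp Require Import all_boot all_order all_algebra.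
From mathcomp Require Import all_classical all_reals all_analysis.
From mathcomp Require Import measurable_realfun.
From mathcomp Require Import lra.

Import Order.TTheory GRing.Theory Num.Theory.
Import numFieldNormedType.Exports.

Module Helpers.
Local Open Scope classical_set_scope.
Local Open Scope ring_scope.
Local Open Scope ereal_scope.

Section kpush.
Context (R : realType) (n m : nat) (p : n.-tuple R -> m.-tuple R)
  (mp : measurable_fun setT p) (k : R.-pker R ~> n.-tuple R).

Definition kpushf (x : R) : set (m.-tuple R) -> \bar R := fun A => k x (p @^-1` A).

Let kp0 x : kpushf x set0 = 0.
Proof. by rewrite /kpushf preimage_set0 measure0. Qed.
Let kp_ge0 x A : 0 <= kpushf x A.
Proof. exact: measure_ge0. Qed.
Let kp_sa x : semi_sigma_additive (kpushf x).
Proof.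
move=> F mF tF mUF; rewrite /kpushf preimage_bigcup.
apply: measure_semi_sigma_additive.
- by move=> i; rewrite -[X in measurable X]setTI; exact: mp.
- apply/trivIsetP => /= i j _ _ ij; rewrite -preimage_setI.
  by move/trivIsetP : tF => /(_ _ _ _ _ ij) ->//; rewrite preimage_set0.
- by rewrite -preimage_bigcup -[X in measurable X]setTI; exact: mp.
Qed.
HB.instance Definition _ x := isMeasure.Build _ _ _ (kpushf x) (kp0 x) (kp_ge0 x) (kp_sa x).

Definition kpushm (x : R) : {measure set (m.-tuple R) -> \bar R} := kpushf x.
Let kp_meas U : measurable U -> measurable_fun [set: R] (fun x => kpushm x U).
Proof.
move=> mU; rewrite /kpushm /kpushf; apply: measurable_kernel.
by rewrite -[X in measurable X]setTI; exact: mp.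
Qed.
HB.instance Definition _ := isKernel.Build _ _ _ _ _ kpushm kp_meas.
Let kp_prob x : kpushm x [set: _] = 1.
Proof. by rewrite /kpushm /= /kpushf preimage_setT prob_kernel. Qed.
HB.instance Definition _ := Kernel_isProbability.Build _ _ _ _ _ kpushm kp_prob.
Definition kpush : R.-pker R ~> m.-tuple R := kpushm.
Lemma kpushE x A : kpush x A = k x (p @^-1` A). Proof. by []. Qed.
End kpush.
Arguments kpush {R n m p} mp k.
Arguments kpushE {R n m p} mp k x A.

Local Close Scope ereal_scope.
Section meas.
Variable R : realType.

Lemma measurable_box m (I : 'I_m -> set R) : (forall i, measurable (I i)) ->
  measurable [set x : m.-tuple R | forall i, I i (tnth x i)].
Proof.
move=> mI.
have -> : [set x : m.-tuple R | forall i, I i (tnth x i)] =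
   \bigcap_(i in [set: 'I_m]) ((@tnth m R)^~ i @^-1` I i).
  by apply/seteqP; split=> x /= H i; [move=> _; exact: H | exact: H].
apply: fin_bigcap_measurable; first exact: finite_finset.
move=> i _; rewrite -[X in measurable X]setTI; exact: measurable_tnth.
Qed.

Lemma unit_cubeE m : unit_cube m =
  [set x : m.-tuple R | forall i, `[0, 1]%classic (tnth x i)].
Proof.
by apply/seteqP; split=> x /= H i; move: (H i); rewrite in_itv.
Qed.

Lemma measurable_cube m : measurable (unit_cube m : set (m.-tuple R)).
Proof.
rewrite unit_cubeE.
have H := @measurable_box m (fun i => `[0, 1]%classic) (fun i => measurable_itv _).
exact: H.
Qed.

Lemma lower_boxE m (u : m.-tuple R) : lower_box u =
  [set x : m.-tuple R | forall i, `[0, tnth u i]%classic (tnth x i)].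
Proof.
by apply/seteqP; split=> x /= H i; move: (H i); rewrite in_itv.
Qed.

Lemma measurable_lower_box m (u : m.-tuple R) : measurable (lower_box u).
Proof.
rewrite lower_boxE.
exact: (@measurable_box m (fun i => `[0, tnth u i]%classic) (fun i => measurable_itv _)).
Qed.

Definition rbox {m} (qr : m.-tuple rat * rat) : set (m.-tuple R) :=
  [set x | forall i, `]ratr (tnth qr.1 i) - ratr qr.2, ratr (tnth qr.1 i) + ratr qr.2[%classic (tnth x i)].

Lemma cont_measurable m (f : m.-tuple R -> R) : cont_on_cube f ->
  measurable_fun (unit_cube m) f.
Proof.
move=> cf; apply: (measurability _ (RGenOpens.measurableE R)).
move=> _ [_ [a [b ->]] <-].
set S := unit_cube m `&` _.
pose F (qr : m.-tuple rat * rat) :=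
  if `[< unit_cube m `&` rbox qr `<=` S >] then rbox qr else set0.
have -> : S = unit_cube m `&` \bigcup_qr F qr.
  apply/seteqP; split=> x.
  - move=> Sx; split; first by case: Sx.
    case: Sx => cx; rewrite /= in_itv /= => /andP[ax xb].
    pose e := Num.min (f x - a) (b - f x).
    have e0 : 0 < e by rewrite /e lt_min !subr_gt0 ax xb.
    have [delta d0 Hd] := cf x (mem_set cx) e e0.
    have [r] := @rat_in_itvoo R 0 (delta / 2) ltac:(by rewrite divr_gt0).
    rewrite in_itv /= => /andP[r0 r2].
    have [qf Hq] : {qf : 'I_m -> rat & forall i,
        ratr (qf i) \in `]tnth x i - ratr r, tnth x i + ratr r[}.
      apply: (@choice _ _ (fun i q => ratr q \in `]tnth x i - ratr r, tnth x i + ratr r[)) => i.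
      apply: rat_in_itvoo; lra.
    exists ([tuple qf i | i < m], r) => //.
    have xbox : rbox ([tuple qf i | i < m], r) x.
      move=> i; have := Hq i; rewrite /= !in_itv /= tnth_mktuple => /andP[h1 h2].
      apply/andP; split; lra.
    rewrite /F; case: asboolP => // Hsub; exfalso; apply: Hsub.
    move=> y [cy by_]; split => //; rewrite /= in_itv /=.
    have /Hd : forall i, `|tnth x i - tnth y i| < delta.
      move=> i; have := by_ i; have := xbox i.
      rewrite /= !in_itv /= tnth_mktuple => /andP[h1 h2] /andP[h3 h4].
      rewrite ltr_norml; apply/andP; split; lra.
    move=> /(_ (mem_set cy)); rewrite ltr_norml => /andP[h1 h2].
    have e1 : e <= f x - a by rewrite /e ge_min lexx.
    have e2 : e <= b - f x by rewrite /e ge_min lexx orbT.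
    apply/andP; split; lra.
  - move=> [cx [qr _]]; rewrite /F; case: asboolP => // H rx.
    exact: H.
apply: measurableI; first exact: measurable_cube.
apply: countable_bigcupT_measurable; first exact: countableP.
move=> qr; rewrite /F; case: asboolP => _ //.
exact: (@measurable_box m (fun i => `]ratr (tnth qr.1 i) - ratr qr.2, ratr (tnth qr.1 i) + ratr qr.2[%classic) (fun i => measurable_itv _)).
Qed.

End meas.

Local Open Scope ereal_scope.
Section push.
Variable R : realType.

Lemma push_integral n m (p : n.-tuple R -> m.-tuple R)
  (mp : measurable_fun setT p)
  (pc : forall x, unit_cube n x -> unit_cube m (p x))
  (mu : {measure set (n.-tuple R) -> \bar R}) (mu0 : mu (~` unit_cube n) = 0)
  (f : m.-tuple R -> R) (cf : cont_on_cube f) :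
  \int[pushforward mu p]_(x in unit_cube m) (f x)%:E =
  \int[mu]_(x in unit_cube n) (f (p x))%:E.
Proof.
have [h hE] : {h : m.-tuple R -> \bar R | h = EFin \o (f \_ (unit_cube m))} by eexists.
have mh : measurable_fun setT h.
  rewrite hE; apply: measurableT_comp => //.
  by apply/(measurable_restrictT _ (@measurable_cube R m)); exact: cont_measurable.
have mcm := @measurable_cube R m; have mcn := @measurable_cube R n.
have mpre : measurable (p @^-1` unit_cube m).
  by rewrite -[X in measurable X]setTI; exact: (mp measurableT _ mcm).
have -> : \int[pushforward mu p]_(x in unit_cube m) (f x)%:E =
    \int[pushforward mu p]_(x in unit_cube m) h x.
  by apply: eq_integral; [exact: mp|] => x xc; rewrite hE /= patchT.
have -> : \int[mu]_(x in unit_cube n) (f (p x))%:E =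
    \int[mu]_(x in unit_cube n) (h \o p) x.
  apply: eq_integral => x; rewrite inE => xc; rewrite hE /= patchT // inE; exact: pc.
have Dn : p @^-1` unit_cube m `\` ~` unit_cube n = unit_cube n.
  rewrite setDE setCK; apply/setIidr => x xc; exact: pc.
have mC : measurable (~` (unit_cube n : set (n.-tuple R))) by exact: (measurableC mcn).
rewrite integralE [in RHS]integralE (funepos_comp h p) (funeneg_comp h p).
rewrite !(ge0_integral_pushforward mp) //; last 2 first.
- by apply: measurable_funeneg; exact: measurable_funTS.
- by apply: measurable_funepos; exact: measurable_funTS.
rewrite (ge0_negligible_integral _ _ _ _ mu0) //; last 2 first.
- apply: measurable_funTS; apply: measurableT_comp; last exact: mp.
  by apply: measurable_funepos; exact: mh.
- by move=> x _; exact: funepos_ge0.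
rewrite [X in _ - X](ge0_negligible_integral _ _ _ _ mu0) //; last 2 first.
- apply: measurable_funTS; apply: measurableT_comp; last exact: mp.
  by apply: measurable_funeneg; exact: mh.
- by move=> x _; exact: funeneg_ge0.
by rewrite Dn.
Qed.
End push.

Local Close Scope ereal_scope.
Section proj.
Variables (R : realType) (n : nat) (J : {set 'I_n.+1}).

Definition ej (w : nat) : 'I_n.+1 := nth ord0 (enum J) w.

Definition projJ (x : n.-tuple R) : #|J|.-tuple R :=
  [tuple nth 0 x (ej w) | w < #|J|].

Lemma tnth_projJ x w : tnth (projJ x) w = nth 0 x (ej w).
Proof. by rewrite tnth_mktuple. Qed.

Lemma nth_tuple_cube (x : n.-tuple R) (j : nat) : unit_cube n x ->
  0 <= nth 0 x j <= 1.
Proof.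
move=> cx; have [jn|jn] := ltnP j n.
  by rewrite -(tnth_nth 0 x (Ordinal jn)); exact: cx.
by rewrite nth_default ?size_tuple // lexx ler01.
Qed.

Lemma projJ_cube x : unit_cube n x -> unit_cube #|J| (projJ x).
Proof. by move=> cx w; rewrite tnth_projJ; exact: nth_tuple_cube. Qed.

Lemma measurable_projJ : measurable_fun setT projJ.
Proof.
apply/measurable_fun_tnthP => w.
have [jn|jn] := ltnP (ej w) n.
  rewrite (_ : _ \o _ = (@tnth n R)^~ (Ordinal jn)); first exact: measurable_tnth.
  by apply/funext => x /=; rewrite tnth_projJ (tnth_nth 0).
rewrite (_ : _ \o _ = cst 0); first exact: measurable_cst.
by apply/funext => x /=; rewrite tnth_projJ nth_default ?size_tuple.
Qed.

Lemma cont_projJ (f : #|J|.-tuple R -> R) : cont_on_cube f ->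
  cont_on_cube (f \o projJ).
Proof.
move=> cf x cx e e0.
have [delta d0 Hd] := cf (projJ x) (mem_set (projJ_cube _ (set_mem cx))) e e0.
exists delta => // y cy Hxy /=; apply: Hd.
  exact: (mem_set (projJ_cube _ (set_mem cy))).
move=> w; rewrite !tnth_projJ.
have [jn|jn] := ltnP (ej w) n.
  by rewrite -!(tnth_nth 0 _ (Ordinal jn)); exact: Hxy.
by rewrite !nth_default ?size_tuple // subrr normr0.
Qed.


Hypothesis HJ : J \subset [set i : 'I_n.+1 | i != ord_max]%SET.

Lemma inJ_lt (j : 'I_n.+1) : j \in J -> (j < n)%N.
Proof.
move=> jJ; have := HJ; move/fintype.subsetP => /(_ j jJ); rewrite inE => /eqP jm.
have := ltn_ord j; rewrite ltnS leq_eqVlt => /orP[/eqP jn|//].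
by exfalso; apply: jm; apply/val_inj.
Qed.

Lemma size_enumJ : size (enum J) = #|J|.
Proof. by rewrite cardE. Qed.

Lemma ej_in (w : 'I_#|J|) : ej w \in J.
Proof. by rewrite -mem_enum /ej mem_nth // size_enumJ. Qed.

Lemma index_ej (w : 'I_#|J|) : index (ej w) (enum J) = w.
Proof. by rewrite /ej index_uniq ?enum_uniq // size_enumJ. Qed.

Definition uJ (u : #|J|.-tuple R) : n.-tuple R :=
  [tuple (if (inord i : 'I_n.+1) \in J then nth 1 u (index (inord i : 'I_n.+1) (enum J)) else 1)
   | i < n].

Lemma nth1_cube (u : #|J|.-tuple R) k : unit_cube #|J| u -> 0 <= nth 1 u k <= 1.
Proof.
move=> cu; have [kn|kn] := ltnP k #|J|.
  by rewrite -(tnth_nth 1 u (Ordinal kn)); exact: cu.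
by rewrite nth_default ?size_tuple // ler01 lexx.
Qed.

Lemma uJ_cube u : unit_cube #|J| u -> unit_cube n (uJ u).
Proof.
move=> cu i; rewrite tnth_mktuple; case: ifP => _; first exact: nth1_cube.
by rewrite ler01 lexx.
Qed.

Lemma marginal_rcons (A : n.+1.-tuple R -> R) (u : #|J|.-tuple R) v :
  marginal A J [tuple of rcons u v] = A [tuple of rcons (uJ u) v].
Proof.
rewrite /marginal; congr (A _); apply: eq_from_tnth => i.
rewrite tnth_mktuple (tnth_nth 0) [in RHS]nth_rcons (size_tuple (uJ u)).
have [iJ|niJ] := boolP (i \in J).
  have iu : (index i (enum J) < #|J|)%N by rewrite -size_enumJ index_mem mem_enum.
  have il := inJ_lt _ iJ.
  rewrite nth_rcons (size_tuple u) iu il.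
  rewrite -(tnth_nth 0 (uJ u) (Ordinal il)) tnth_mktuple.
  have -> : (inord (Ordinal il) : 'I_n.+1) = i by apply/val_inj; rewrite /= inordK.
  by rewrite iJ.
have [im|nim] := eqVneq i ord_max.
  by rewrite im eqxx nth_rcons (size_tuple u) ltnn eqxx /= ltnn.
have il : (i < n)%N.
  have := ltn_ord i; rewrite ltnS leq_eqVlt => /orP[/eqP jn|//].
  by exfalso; move/eqP: nim; apply; apply/val_inj.
rewrite il -(tnth_nth 0 (uJ u) (Ordinal il)) tnth_mktuple.
have -> : (inord (Ordinal il) : 'I_n.+1) = i by apply/val_inj; rewrite /= inordK.
by rewrite (negbTE niJ).
Qed.


Lemma lower_box_sub u : lower_box (uJ u) `<=` projJ @^-1` lower_box u.
Proof.
move=> x Hx w /=; rewrite tnth_projJ.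
have il := inJ_lt _ (ej_in w).
have := Hx (Ordinal il); rewrite tnth_mktuple (tnth_nth 0).
have -> : (inord (Ordinal il) : 'I_n.+1) = ej w by apply/val_inj; rewrite /= inordK.
by rewrite ej_in index_ej (tnth_nth 1 u).
Qed.

Lemma lower_box_sup u : projJ @^-1` lower_box u `<=` lower_box (uJ u) `|` ~` unit_cube n.
Proof.
move=> x Hx; have [cx|ncx] := pselect (unit_cube n x); last by right.
left => i; rewrite tnth_mktuple.
have [/andP[x0 x1]] := cx i.
case: ifPn => iJ; last by rewrite x0 x1.
have wl : (index (inord i : 'I_n.+1) (enum J) < #|J|)%N.
  by rewrite -size_enumJ index_mem mem_enum.
have := Hx (Ordinal wl); rewrite /= tnth_projJ /ej /= nth_index ?mem_enum //.
rewrite inordK; last by apply: leqW.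
by rewrite -(tnth_nth 0) (tnth_nth 1 u).
Qed.

End proj.
Arguments projJ {R n} J x.
Arguments measurable_projJ {R n} J.

Local Open Scope ereal_scope.
Lemma markov_marg (R : realType) (n : nat) (J : {set 'I_n.+1})
  (HJ : J \subset [set i : 'I_n.+1 | i != ord_max]%SET)
  (A : n.+1.-tuple R -> R) (K : R.-pker R ~> n.-tuple R) :
  markov_kernel_of A K ->
  markov_kernel_of (marginal A J) (kpush (measurable_projJ J) K).
Proof.
move=> [H0 H1].
have mcn := @measurable_cube R n; have mcm := @measurable_cube R #|J|.
have mC : measurable (~` (unit_cube n : set (n.-tuple R))) by exact: (measurableC mcn).
have mpre B : measurable B -> measurable (projJ J @^-1` B).
  by move=> mB; rewrite -[X in measurable X]setTI; exact: (measurable_projJ J measurableT _ mB).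
split.
  move=> v v01; change (K v (projJ J @^-1` ~` (unit_cube #|J|)) = 0); apply/eqP; rewrite eq_le measure_ge0 andbT.
  rewrite -(H0 v v01); apply: le_measure; rewrite ?inE //.
    by apply: mpre; exact: measurableC.
  move=> x /= Hx cx; apply: Hx; exact: (@projJ_cube R n J x cx).
move=> u v /set_mem uc v01.
rewrite (@marginal_rcons R n J HJ) H1 //; last by apply/mem_set; exact: (@uJ_cube R n J u uc).
apply: eq_integral => t /[!inE] /= /[!in_itv] /= /andP[t0 tv].
have t01 : (0 <= t <= 1)%R.
  by apply/andP; split => //; apply: (le_trans tv); case/andP: v01.
change (K t (lower_box (uJ R n J u)) = K t (projJ J @^-1` lower_box u)).
apply/eqP; rewrite eq_le; apply/andP; split.
  by apply: le_measure; rewrite ?inE //; [exact: measurable_lower_box|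
    apply: mpre; exact: measurable_lower_box| exact: (@lower_box_sub R n J HJ u)].
apply: (le_trans (y := K t (lower_box (uJ R n J u) `|` ~` unit_cube n))).
  apply: le_measure; rewrite ?inE //.
  - by apply: mpre; exact: measurable_lower_box.
  - by apply: measurableU => //; exact: measurable_lower_box.
  - exact: (@lower_box_sup R n J u).
apply: (le_trans (measureU2 _ _ _)) => //; first exact: measurable_lower_box.
apply: (@le_trans _ _ (K t (lower_box (uJ R n J u)) + 0)).
  apply: leeD2l; rewrite le_eqVlt; apply/orP; left; apply/eqP; exact: (H0 t t01).
by rewrite adde0.
Qed.

End Helpers.
Import Helpers.

Theorem theorem2p2 (R : realType) (n : nat) (hn : (1 <= n)%N)
    (C : n.+1.-tuple R -> R) (C_ : nat -> n.+1.-tuple R -> R) :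
  copula C -> (forall k, copula (C_ k)) ->
  wcc C_ C ->
  forall J : {set 'I_n.+1},
    J \subset [set i : 'I_n.+1 | i != ord_max] -> (0 < #|J|)%N ->
    wcc (fun k => marginal (C_ k) J) (marginal C J).
Proof.
Local Open Scope classical_set_scope.
Local Open Scope ring_scope.
Local Open Scope ereal_scope.
move=> _ _ [K_ [K [HK_ HK Hae]]] J HJ _.
exists (fun k => kpush (measurable_projJ J) (K_ k)), (kpush (measurable_projJ J) K).
split.
- by move=> k; apply: markov_marg.
- by apply: markov_marg.
apply: filterS Hae; first exact: (ae_filter_ringOfSetsType lebesgue_measure).
move=> v Hv v01 f cf.
have E (k' : R.-pker R ~> n.-tuple R) : k' v (~` unit_cube n) = 0 ->
    \int[kpush (measurable_projJ J) k' v]_(x in unit_cube #|J|) (f x)%:E =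
    \int[k' v]_(x in unit_cube n) ((f \o projJ J) x)%:E.
  move=> h0.
  exact: (@push_integral R n #|J| (projJ J) (measurable_projJ J) (@projJ_cube R n J) (k' v) h0 f cf).
rewrite E; last by case: HK => + _; apply.
have -> : (fun k => \int[kpush (measurable_projJ J) (K_ k) v]_(x in unit_cube #|J|) (f x)%:E) =
    (fun k => \int[K_ k v]_(x in unit_cube n) ((f \o projJ J) x)%:E).
  by apply/funext => k; apply: E; case: (HK_ k) => + _; apply.
exact: (Hv v01 _ (@cont_projJ R n J f cf)).
Qed.
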